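(* Let \(a,b,c\) be positive integers, \(m\) a positive integer that is not a perfect square, with \(\gcd(a,b^2-c^2m)=1\), and let \(A,B\in\mathbb Z\). Let \((\bar x,\bar y,\bar z,\bar w)\) be the unique element of \(\mathbb Z^4\) with \(0\leq\bar z,\bar w<a\) satisfying \(a(\bar x+\bar y\sqrt m)+(b+c\sqrt m)(\bar z+\bar w\sqrt m)=A+B\sqrt m\). Then the equation \(a(x+y\sqrt m)+(b+c\sqrt m)(z+w\sqrt m)=A+B\sqrt m\) has a solution with \(x,y,z,w\in\mathbb N\) if and only if \(\bar x\geq 0\) and \(\bar y\geq 0\).
   Context: \(\mathbb N\) denotes the set of non-negative integers. (Existence and uniqueness of \((\bar x,\bar y,\bar z,\bar w)\) under the stated hypotheses may be assumed.) *)

(* Defs.v *)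
From Stdlib Require Export Reals ZArith.
Open Scope R_scope.

Definition qsurd (m u v : Z) : R := IZR u + IZR v * sqrt (IZR m).

Definition is_square (m : Z) : Prop := exists k : Z, m = (k * k)%Z.

(* Main.v *)
Require Import Defs.
From Stdlib Require Import Reals ZArith Lia Lra Psatz.
Open Scope R_scope.

Lemma sq_lemma (m u v : Z) : v <> 0%Z -> (m * (v*v) = u*u)%Z -> is_square m.
Proof.
  intros hv he.
  set (g := Z.gcd u v).
  assert (hg : g <> 0%Z) by (intro H; apply Z.gcd_eq_0 in H; lia).
  destruct (Z.gcd_divide_l u v) as [u1 Hu].
  destruct (Z.gcd_divide_r u v) as [v1 Hv].
  fold g in Hu, Hv.
  assert (hc : Z.gcd u1 v1 = 1%Z).
  { assert (u1 = u / g)%Z by (rewrite Hu, Z.div_mul; auto).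
    assert (v1 = v / g)%Z by (rewrite Hv, Z.div_mul; auto).
    subst u1 v1. apply Z.gcd_div_gcd; auto. }
  assert (he2 : (m * (v1*v1) = u1*u1)%Z).
  { apply (Z.mul_reg_r _ _ (g*g)). nia.
    rewrite Hu, Hv in he. lia. }
  assert (hd : (v1 | u1)%Z).
  { apply (Z.gauss _ u1). exists (m*v1)%Z. lia. rewrite Z.gcd_comm; auto. }
  assert (hd1 : (v1 | 1)%Z).
  { rewrite <- hc. apply Z.gcd_greatest; auto. apply Z.divide_refl. }
  exists u1. apply Z.divide_1_r in hd1. destruct hd1; subst v1; lia.
Qed.

Lemma irr (m u v : Z) : (0 < m)%Z -> ~ is_square m ->
  IZR u + IZR v * sqrt (IZR m) = 0 -> u = 0%Z /\ v = 0%Z.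
Proof.
  intros hm hsq h.
  destruct (Z.eq_dec v 0) as [hv|hv].
  - subst v. split; auto. apply eq_IZR. lra.
  - exfalso. apply hsq. apply (sq_lemma m u v hv).
    apply eq_IZR. rewrite !mult_IZR.
    assert (hs : sqrt (IZR m) * sqrt (IZR m) = IZR m).
    { apply sqrt_sqrt. apply IZR_le. lia. }
    assert (IZR u = - (IZR v * sqrt (IZR m))) by lra.
    rewrite H. replace (-(IZR v * sqrt (IZR m)) * -(IZR v * sqrt (IZR m))) with (IZR v * IZR v * (sqrt (IZR m) * sqrt (IZR m))) by ring. rewrite hs; ring.
Qed.

Lemma qsurd_inj (m u v u' v' : Z) : (0 < m)%Z -> ~ is_square m ->
  qsurd m u v = qsurd m u' v' -> u = u' /\ v = v'.
Proof.
  intros hm hsq h. unfold qsurd in h.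
  destruct (irr m (u - u') (v - v') hm hsq) as [h1 h2].
  { rewrite !minus_IZR. lra. }
  lia.
Qed.

Lemma expand (m a b c x y z w : Z) : (0 < m)%Z ->
  IZR a * qsurd m x y + qsurd m b c * qsurd m z w
  = qsurd m (a*x + b*z + c*w*m) (a*y + b*w + c*z).
Proof.
  intros hm. unfold qsurd.
  assert (hs : sqrt (IZR m) * sqrt (IZR m) = IZR m).
  { apply sqrt_sqrt. apply IZR_le. lia. }
  rewrite !plus_IZR, !mult_IZR. set (s := sqrt (IZR m)) in *. rewrite <- hs. ring.
Qed.

Theorem lemma6 (a b c m A B : Z)
  (ha : (0 < a)%Z) (hb : (0 < b)%Z) (hc : (0 < c)%Z) (hm : (0 < m)%Z)
  (hmsq : ~ is_square m)
  (hgcd : Z.gcd a (b ^ 2 - c ^ 2 * m) = 1%Z)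
  (xb yb zb wb : Z)
  (hz : (0 <= zb < a)%Z) (hw : (0 <= wb < a)%Z)
  (hbar : IZR a * qsurd m xb yb + qsurd m b c * qsurd m zb wb = qsurd m A B) :
  (exists x y z w : nat,
      IZR a * qsurd m (Z.of_nat x) (Z.of_nat y)
      + qsurd m b c * qsurd m (Z.of_nat z) (Z.of_nat w) = qsurd m A B)
  <-> ((0 <= xb)%Z /\ (0 <= yb)%Z).
Proof.
  rewrite expand in hbar by auto.
  apply qsurd_inj in hbar; auto. destruct hbar as [e1 e2].
  split.
  - intros [x [y [z [w h]]]].
    rewrite expand in h by auto.
    apply qsurd_inj in h; auto. destruct h as [f1 f2].
    set (X := Z.of_nat x) in *. set (Y := Z.of_nat y) in *.
    set (Zz := Z.of_nat z) in *. set (W := Z.of_nat w) in *.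
    assert (hX : (0 <= X)%Z) by lia. assert (hY : (0 <= Y)%Z) by lia.
    assert (hZ : (0 <= Zz)%Z) by lia. assert (hW : (0 <= W)%Z) by lia.
    set (D := (b ^ 2 - c ^ 2 * m)%Z) in *.
    assert (g1 : (a*(xb-X) = b*(Zz-zb)+c*m*(W-wb))%Z) by lia.
    assert (g2 : (a*(yb-Y) = b*(W-wb)+c*(Zz-zb))%Z) by lia.
    assert (hdz : (a | D * (Zz - zb))%Z).
    { exists (b*(xb - X) - c*m*(yb - Y))%Z.
      replace ((b*(xb - X) - c*m*(yb - Y))*a)%Z with (b*(a*(xb-X)) - c*m*(a*(yb-Y)))%Z by ring.
      rewrite g1, g2. unfold D. ring. }
    assert (hdw : (a | D * (W - wb))%Z).
    { exists (b*(yb - Y) - c*(xb - X))%Z.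
      replace ((b*(yb - Y) - c*(xb - X))*a)%Z with (b*(a*(yb-Y)) - c*(a*(xb-X)))%Z by ring.
      rewrite g1, g2. unfold D. ring. }
    apply Z.gauss in hdz; auto. apply Z.gauss in hdw; auto.
    destruct hdz as [k hk]. destruct hdw as [l hl].
    assert (hk0 : (0 <= k)%Z) by nia.
    assert (hl0 : (0 <= l)%Z) by nia.
    assert (hx : (xb = X + b*k + c*m*l)%Z).
    { apply (Z.mul_reg_l _ _ a). lia. nia. }
    assert (hy : (yb = Y + c*k + b*l)%Z).
    { apply (Z.mul_reg_l _ _ a). lia. nia. }
    split; nia.
  - intros [h1 h2].
    exists (Z.to_nat xb), (Z.to_nat yb), (Z.to_nat zb), (Z.to_nat wb).
    rewrite !Z2Nat.id by lia.
    rewrite expand by auto. rewrite e1, e2. reflexivity.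
Qed.
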